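(* Assume the capacities satisfy (C1)–(C3), with limiting sequence $\{g_n\}_{n\ge0}$ from (C2). Then there exists $\alpha>0$ such that $$\sum_{n=0}^\infty n\,\big|g^{(N)}_n-g_n\big|=O(N^{-\alpha}).$$
   Context: Capacities $\lambda_1,\dots,\lambda_N>0$ deterministic; $\mu_N=\frac1N\sum_i\lambda_i$, $\nu_N=\sum_i\lambda_i^2/\sum_i\lambda_i$, $f^{(N)}_n=\frac1N\sum_i e^{-\lambda_i}\frac{\lambda_i^n}{n!}$, $g^{(N)}_n=\frac{1}{N\mu_N}\sum_i e^{-\lambda_i}\frac{\lambda_i^{n+1}}{n!}$ ($n\ge0$); $d_{TV}(p,q)=\frac12\sum_j|p_j-q_j|$. (C1): there are $\mu\in(0,\infty)$, $\nu\in(1,\infty)$, $\alpha_1>0$ with $|\mu_N-\mu|,|\nu_N-\nu|=O(N^{-\alpha_1})$. (C2): there are sequences $\{f_n\}$, $\{g_n\}$ independent of $N$ and $\alpha_2>0$ with $d_{TV}(f^{(N)},f)=O(N^{-\alpha_2})$, $d_{TV}(g^{(N)},g)=O(N^{-\alpha_2})$. (C3): there is $\tau>3$ such that for every $\varepsilon>0$ (with $\gamma:=\frac1{\tau-1}+\varepsilon<\frac12$), $\limsup_N\frac1N\sum_i\lambda_i^{\tau-1-\varepsilon}<\infty$ and $\max_i\lambda_i\le N^\gamma$. *)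

(* Defs.v *)
From Stdlib Require Import Reals Lra List.
From Coquelicot Require Import Coquelicot.
Open Scope R_scope.

Definition sumN (N : nat) (f : nat -> R) : R :=
  fold_right Rplus 0 (map f (List.seq 0 N)).

(* Capacities: lam N i is lambda_i for the system of size N (i < N). *)
Definition muN (lam : nat -> nat -> R) (N : nat) : R :=
  sumN N (fun i => lam N i) / INR N.

Definition nuN (lam : nat -> nat -> R) (N : nat) : R :=
  sumN N (fun i => lam N i ^ 2) / sumN N (fun i => lam N i).

Definition fN (lam : nat -> nat -> R) (N n : nat) : R :=
  sumN N (fun i => exp (- lam N i) * lam N i ^ n / INR (Factorial.fact n)) / INR N.

Definition gN (lam : nat -> nat -> R) (N n : nat) : R :=
  sumN N (fun i => exp (- lam N i) * lam N i ^ (S n) / INR (Factorial.fact n))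
    / (INR N * muN lam N).

Definition bigO_pow (x : nat -> R) (a : R) : Prop :=
  exists C : R, exists N0 : nat, forall N : nat, (N0 <= N)%nat ->
    Rabs (x N) <= C * Rpower (INR N) (- a).

Definition dTV_bigO (p : nat -> nat -> R) (q : nat -> R) (a : R) : Prop :=
  exists C : R, exists N0 : nat, forall N : nat, (N0 <= N)%nat ->
    ex_series (fun j => Rabs (p N j - q j)) /\
    / 2 * Series (fun j => Rabs (p N j - q j)) <= C * Rpower (INR N) (- a).

Definition cond_C1 (lam : nat -> nat -> R) (mu nu a1 : R) : Prop :=
  0 < mu /\ 1 < nu /\ 0 < a1 /\
  bigO_pow (fun N => muN lam N - mu) a1 /\
  bigO_pow (fun N => nuN lam N - nu) a1.

Definition cond_C2 (lam : nat -> nat -> R) (f g : nat -> R) (a2 : R) : Prop :=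
  0 < a2 /\ dTV_bigO (fN lam) f a2 /\ dTV_bigO (gN lam) g a2.

Definition cond_C3 (lam : nat -> nat -> R) : Prop :=
  exists tau : R, 3 < tau /\
    forall eps : R, 0 < eps -> / (tau - 1) + eps < / 2 ->
      Rbar_lt (LimSup_seq (fun N => sumN N (fun i => Rpower (lam N i) (tau - 1 - eps)) / INR N))
              p_infty /\
      (forall N i : nat, (i < N)%nat -> lam N i <= Rpower (INR N) (/ (tau - 1) + eps)).

(* Main.v *)
Require Import Defs.
From Stdlib Require Import Reals Lra Lia List.
From Coquelicot Require Import Coquelicot.
Open Scope R_scope.

Lemma sumS (a : nat -> R) n : @eq R (sum_n a (S n)) (sum_n a n + a (S n)).
Proof. rewrite sum_Sn. reflexivity. Qed.

Lemma sum_n_le (a b : nat -> R) P : (forall n, (n <= P)%nat -> a n <= b n) -> sum_n a P <= sum_n b P.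
Proof.
  induction P; intros H.
  - rewrite !sum_O. apply H; lia.
  - rewrite !sumS. apply Rplus_le_compat. apply IHP; intros; apply H; lia. apply H; lia.
Qed.

Lemma sum_n_nonneg (a : nat -> R) P : (forall n, 0 <= a n) -> 0 <= sum_n a P.
Proof.
  intros H; induction P. rewrite sum_O; auto. rewrite sumS. specialize (H (S P)); lra.
Qed.

Lemma sum_n_mono (a : nat -> R) P k : (forall n, 0 <= a n) -> sum_n a P <= sum_n a (P + k).
Proof.
  intros H; induction k. rewrite Nat.add_0_r; lra.
  rewrite Nat.add_succ_r, sumS. specialize (H (S (P+k))); lra.
Qed.

Lemma partial_le_series (a : nat -> R) P : (forall n, 0 <= a n) -> ex_series a -> sum_n a P <= Series a.
Proof.
  intros H Hex. apply Series_correct in Hex.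
  assert (Hl : is_lim_seq (sum_n a) (Series a)) by exact Hex.
  assert (Rbar_le (sum_n a P) (Series a)).
  { apply (is_lim_seq_le_loc (fun _ => sum_n a P) (sum_n a)).
    - exists P. intros n Hn. replace n with (P + (n - P))%nat by lia. apply sum_n_mono; auto.
    - apply is_lim_seq_const.
    - exact Hl. }
  exact H0.
Qed.

Lemma series_of_bounded (a : nat -> R) M : (forall n, 0 <= a n) -> (forall P, sum_n a P <= M) ->
  ex_series a /\ Series a <= M.
Proof.
  intros H HM.
  assert (Hf : ex_finite_lim_seq (sum_n a)).
  { apply ex_finite_lim_seq_incr with M; auto. intros n; rewrite sumS; specialize (H (S n)); lra. }
  destruct Hf as [l Hl].
  assert (Hs : is_series a l) by exact Hl.
  split. exists l; exact Hs.
  rewrite (is_series_unique a l Hs).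
  assert (Rbar_le l M).
  { apply (is_lim_seq_le (sum_n a) (fun _ => M)); auto. apply is_lim_seq_const. }
  exact H0.
Qed.

Lemma sum_n_scal_r (a : nat -> R) c P : @eq R (sum_n (fun n => c * a n) P) (c * sum_n a P).
Proof. induction P. rewrite !sum_O; auto. rewrite !sumS, IHP; ring. Qed.

Lemma sum_n_plusR (a b : nat -> R) P : @eq R (sum_n (fun n => a n + b n) P) (sum_n a P + sum_n b P).
Proof. induction P. rewrite !sum_O; auto. rewrite !sumS, IHP; ring. Qed.

Lemma fold_plus_acc l a : fold_right Rplus a l = fold_right Rplus 0 l + a.
Proof. induction l; simpl. ring. rewrite IHl; ring. Qed.

Lemma sumN_S N f : sumN (S N) f = sumN N f + f N.
Proof.
  unfold sumN. rewrite seq_S, map_app, fold_right_app. simpl.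
  rewrite fold_plus_acc. ring.
Qed.

Lemma sumN_0 f : sumN 0 f = 0.
Proof. reflexivity. Qed.

Lemma sumN_le N f g : (forall i, (i < N)%nat -> f i <= g i) -> sumN N f <= sumN N g.
Proof.
  induction N; intros H. rewrite !sumN_0; lra.
  rewrite !sumN_S. apply Rplus_le_compat. apply IHN; intros; apply H; lia. apply H; lia.
Qed.

Lemma sumN_pos N f : (0 < N)%nat -> (forall i, (i < N)%nat -> 0 < f i) -> 0 < sumN N f.
Proof.
  induction N; intros HN H. lia.
  rewrite sumN_S. destruct N. rewrite sumN_0. specialize (H 0%nat); assert (0 < f 0%nat) by (apply H; lia); lra.
  assert (0 < sumN (S N) f) by (apply IHN; [lia| intros; apply H; lia]).
  assert (0 < f (S N)) by (apply H; lia). lra.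
Qed.

Lemma sumN_nonneg N f : (forall i, (i < N)%nat -> 0 <= f i) -> 0 <= sumN N f.
Proof.
  induction N; intros H. rewrite sumN_0; lra.
  rewrite sumN_S. assert (0 <= sumN N f) by (apply IHN; intros; apply H; lia).
  assert (0 <= f N) by (apply H; lia). lra.
Qed.

Lemma sumN_plus N f g : sumN N (fun i => f i + g i) = sumN N f + sumN N g.
Proof. induction N. rewrite !sumN_0; ring. rewrite !sumN_S, IHN; ring. Qed.

Lemma sumN_scal N c f : sumN N (fun i => c * f i) = c * sumN N f.
Proof. induction N. rewrite !sumN_0; ring. rewrite !sumN_S, IHN; ring. Qed.

Lemma sum_n_sumN N (G : nat -> nat -> R) P :
  @eq R (sum_n (fun n => sumN N (fun i => G i n)) P) (sumN N (fun i => sum_n (G i) P)).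
Proof.
  induction N.
  - rewrite sumN_0. rewrite (sum_n_ext _ (fun _ => 0)) by (intros; apply sumN_0).
    rewrite sum_n_const; ring.
  - rewrite sumN_S. rewrite (sum_n_ext _ (fun n => sumN N (fun i => G i n) + G N n)) by (intros n; apply (sumN_S N (fun i => G i n))).
    rewrite sum_n_plusR, IHN. reflexivity.
Qed.

Definition pa (l : R) (n : nat) : R := l ^ n / INR (Factorial.fact n).

Lemma pa_S l n : INR (S n) * pa l (S n) = l * pa l n.
Proof.
  unfold pa. rewrite fact_simpl, mult_INR. simpl pow.
  assert (INR (Factorial.fact n) <> 0) by apply INR_fact_neq_0.
  assert (INR (S n) <> 0) by (apply not_0_INR; lia).
  field. split; auto.
Qed.

Lemma pa_nonneg l n : 0 <= l -> 0 <= pa l n.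
Proof.
  intros. unfold pa. apply Rmult_le_pos. apply pow_le; auto.
  apply Rlt_le, Rinv_0_lt_compat, lt_0_INR, Factorial.lt_O_fact.
Qed.

Lemma T_S l P : @eq R (sum_n (fun n => INR n * pa l n) (S P)) (l * sum_n (pa l) P).
Proof.
  induction P.
  - rewrite sumS, !sum_O. rewrite pa_S. simpl INR. ring.
  - rewrite sumS, IHP, pa_S, sumS. ring.
Qed.

Lemma U_S l P : @eq R (sum_n (fun n => INR n * INR n * pa l n) (S P))
   (l * (sum_n (fun n => INR n * pa l n) P + sum_n (pa l) P)).
Proof.
  induction P.
  - rewrite sumS, !sum_O. replace (INR 1 * INR 1 * pa l 1) with (INR 1 * pa l 1) by (simpl; ring).
    rewrite pa_S. simpl INR. ring.
  - rewrite sumS, IHP. rewrite (sumS (fun n => INR n * pa l n)), (sumS (pa l)).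
    replace (INR (S (S P)) * INR (S (S P)) * pa l (S (S P))) with (INR (S (S P)) * (INR (S (S P)) * pa l (S (S P)))) by ring.
    rewrite pa_S. rewrite !S_INR. ring.
Qed.

Lemma s_le l P : 0 <= l -> sum_n (pa l) P <= exp l.
Proof. intros. rewrite sum_n_Reals. apply exp_ge_taylor; auto. Qed.

Lemma T_le l P : 0 <= l -> sum_n (fun n => INR n * pa l n) P <= l * exp l.
Proof.
  intros. destruct P.
  - rewrite sum_O. simpl. rewrite Rmult_0_l. apply Rmult_le_pos; auto. apply Rlt_le, exp_pos.
  - rewrite T_S. apply Rmult_le_compat_l; auto. apply s_le; auto.
Qed.

Lemma U_le l P : 0 <= l -> sum_n (fun n => INR n * INR n * pa l n) P <= l * (l * exp l + exp l).
Proof.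
  intros. destruct P.
  - rewrite sum_O. simpl. rewrite !Rmult_0_l. apply Rmult_le_pos; auto.
    assert (0 < exp l) by apply exp_pos. nra.
  - rewrite U_S. apply Rmult_le_compat_l; auto. apply Rplus_le_compat. apply T_le; auto. apply s_le; auto.
Qed.
Definition ind (K : R) (n : nat) : R := if Rlt_dec K (INR n) then 1 else 0.

Lemma ind_01 K n : 0 <= ind K n <= 1.
Proof. unfold ind; destruct Rlt_dec; lra. Qed.

Lemma exp_le' x y : x <= y -> exp x <= exp y.
Proof. intros [H|H]. apply Rlt_le, exp_increasing; auto. subst; lra. Qed.

Lemma rpow_sq_bound l L q : 0 < L -> L < l -> 2 < q -> l ^ 2 <= Rpower L (2 - q) * Rpower l q.
Proof.
  intros HL Hl Hq.
  assert (E : l ^ 2 = Rpower l (2 - q) * Rpower l q).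
  { rewrite <- Rpower_plus. replace (2 - q + q) with (INR 2) by (simpl; ring).
    rewrite Rpower_pow; auto; lra. }
  rewrite E. apply Rmult_le_compat_r. unfold Rpower; apply Rlt_le, exp_pos.
  unfold Rpower. apply exp_le'.
  assert (ln L < ln l) by (apply ln_increasing; lra). nra.
Qed.

Lemma tail_i l K L q P : 0 < l -> 0 < K -> 0 < L -> 2 < q ->
  sum_n (fun n => ind K n * (INR n * (exp (- l) * l ^ (S n) / INR (Factorial.fact n)))) P
  <= Rpower L (2 - q) * Rpower l q + (L + 1) / K * l ^ 2.
Proof.
  intros Hl HK HL Hq.
  assert (Ew : forall n, exp (- l) * l ^ (S n) / INR (Factorial.fact n) = exp (- l) * l * pa l n).
  { intros n. unfold pa. simpl pow. unfold Rdiv. ring. }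
  assert (Hel : exp (- l) * exp l = 1) by (rewrite <- exp_plus; replace (-l + l) with 0 by ring; apply exp_0).
  assert (He : 0 < exp (- l)) by apply exp_pos.
  assert (Hrq : 0 < Rpower L (2 - q) * Rpower l q) by (unfold Rpower; apply Rmult_lt_0_compat; apply exp_pos).
  assert (Hl2 : 0 <= (L + 1) / K * l ^ 2).
  { apply Rmult_le_pos. apply Rlt_le, Rdiv_lt_0_compat; lra. apply pow_le; lra. }
  destruct (Rlt_dec L l) as [HLl | HLl].
  - apply Rle_trans with (sum_n (fun n => exp (- l) * l * (INR n * pa l n)) P).
    + apply sum_n_le. intros n _. rewrite Ew.
      assert (0 <= exp (- l) * l * (INR n * pa l n)).
      { apply Rmult_le_pos. nra. apply Rmult_le_pos. apply pos_INR. apply pa_nonneg; lra. }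
      pose proof (ind_01 K n). nra.
    + rewrite sum_n_scal_r.
      apply Rle_trans with (exp (- l) * l * (l * exp l)).
      { apply Rmult_le_compat_l. nra. apply T_le; lra. }
      replace (exp (- l) * l * (l * exp l)) with (l ^ 2 * (exp (-l) * exp l)) by ring.
      rewrite Hel, Rmult_1_r. pose proof (rpow_sq_bound l L q HL HLl Hq). lra.
  - apply Rle_trans with (sum_n (fun n => exp (- l) * l / K * (INR n * INR n * pa l n)) P).
    + apply sum_n_le. intros n _. rewrite Ew. unfold ind. destruct Rlt_dec as [Hn|Hn].
      * assert (0 <= exp (- l) * l * pa l n) by (apply Rmult_le_pos; [nra| apply pa_nonneg; lra]).
        assert (INR n <= INR n * INR n / K).
        { apply Rmult_le_reg_r with K; auto. unfold Rdiv. rewrite Rmult_assoc, Rinv_l by lra. nra. }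
        replace (exp (- l) * l / K * (INR n * INR n * pa l n)) with ((exp (- l) * l * pa l n) * (INR n * INR n / K)) by (field; lra).
        nra.
      * rewrite Rmult_0_l. apply Rmult_le_pos. apply Rmult_le_pos. nra. apply Rlt_le, Rinv_0_lt_compat; lra.
        apply Rmult_le_pos. apply Rmult_le_pos; apply pos_INR. apply pa_nonneg; lra.
    + rewrite sum_n_scal_r.
      apply Rle_trans with (exp (- l) * l / K * (l * (l * exp l + exp l))).
      { apply Rmult_le_compat_l. apply Rmult_le_pos. nra. apply Rlt_le, Rinv_0_lt_compat; lra. apply U_le; lra. }
      replace (exp (- l) * l / K * (l * (l * exp l + exp l))) with ((l + 1) / K * l ^ 2 * (exp (-l) * exp l)) by (field; lra).
      rewrite Hel, Rmult_1_r.
      assert ((l + 1) / K * l ^ 2 <= (L + 1) / K * l ^ 2).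
      { apply Rmult_le_compat_r. apply pow_le; lra. unfold Rdiv. apply Rmult_le_compat_r. apply Rlt_le, Rinv_0_lt_compat; lra. lra. }
      lra.
Qed.

Lemma tail_N lam M K L q B mu nu :
  (forall i, (i < M)%nat -> 0 < lam M i) -> (0 < M)%nat -> 0 < K -> 0 < L -> 2 < q -> 0 < mu -> 0 <= B ->
  sumN M (fun i => Rpower (lam M i) q) / INR M <= B ->
  mu / 2 <= muN lam M -> nuN lam M <= nu ->
  forall P, sum_n (fun n => ind K n * (INR n * Rabs (gN lam M n))) P
    <= Rpower L (2 - q) * (B * (2 / mu)) + (L + 1) / K * nu.
Proof.
  intros Hpos HM HK HL Hq Hmu HB HA Hmun Hnun P.
  set (Sm := sumN M (fun i => lam M i)).
  assert (HS : 0 < Sm) by (apply sumN_pos; auto).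
  assert (HMr : 0 < INR M) by (apply lt_0_INR; auto).
  assert (ES : INR M * muN lam M = Sm) by (unfold muN; fold Sm; field; lra).
  set (w := fun i n => exp (- lam M i) * lam M i ^ (S n) / INR (Factorial.fact n)).
  assert (Hw : forall i n, (i < M)%nat -> 0 <= w i n).
  { intros i n Hi. unfold w. apply Rmult_le_pos. apply Rmult_le_pos. apply Rlt_le, exp_pos.
    apply pow_le. apply Rlt_le, Hpos; auto. apply Rlt_le, Rinv_0_lt_compat, lt_0_INR, Factorial.lt_O_fact. }
  assert (Eg : forall n, gN lam M n = / Sm * sumN M (fun i => w i n)).
  { intros n. unfold gN. rewrite ES. unfold w, Rdiv. ring. }
  assert (Hg0 : forall n, 0 <= gN lam M n).
  { intros n. rewrite Eg. apply Rmult_le_pos. apply Rlt_le, Rinv_0_lt_compat; auto.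
    apply sumN_nonneg. intros; apply Hw; auto. }
  rewrite (sum_n_ext _ (fun n => / Sm * sumN M (fun i => ind K n * (INR n * w i n)))).
  2:{ intros n. rewrite Rabs_pos_eq by apply Hg0. rewrite Eg.
      rewrite (sumN_scal M (ind K n) (fun i => INR n * w i n)). rewrite (sumN_scal M (INR n)). match goal with |- ?a = ?b => change (@eq R a b) end. ring. }
  rewrite sum_n_scal_r, sum_n_sumN.
  apply Rle_trans with (/ Sm * sumN M (fun i => Rpower L (2 - q) * Rpower (lam M i) q + (L + 1) / K * lam M i ^ 2)).
  { apply Rmult_le_compat_l. apply Rlt_le, Rinv_0_lt_compat; auto.
    apply sumN_le. intros i Hi. apply tail_i; auto. }
  rewrite sumN_plus, !sumN_scal.
  assert (Eq1 : / Sm * (Rpower L (2 - q) * sumN M (fun i => Rpower (lam M i) q) + (L + 1) / K * sumN M (fun i => lam M i ^ 2))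
     = Rpower L (2 - q) * ((sumN M (fun i => Rpower (lam M i) q) / INR M) / muN lam M) + (L + 1) / K * nuN lam M).
  { unfold nuN. fold Sm. rewrite <- ES. assert (0 < muN lam M) by lra. field. split; lra. }
  rewrite Eq1.
  assert (Hmup : 0 < muN lam M) by lra.
  assert (HLq : 0 < Rpower L (2 - q)) by (unfold Rpower; apply exp_pos).
  assert (HLK : 0 <= (L + 1) / K) by (apply Rlt_le, Rdiv_lt_0_compat; lra).
  apply Rplus_le_compat.
  - apply Rmult_le_compat_l. lra.
    apply Rle_trans with (B / muN lam M).
    { unfold Rdiv. apply Rmult_le_compat_r. apply Rlt_le, Rinv_0_lt_compat; auto. exact HA. }
    unfold Rdiv. apply Rmult_le_compat_l; auto.
    replace (2 * / mu) with (/ (mu / 2)) by (field; lra).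
    apply Rinv_le_contravar; lra.
  - apply Rmult_le_compat_l; auto.
Qed.

Lemma rpow_small a e : 0 < a -> 0 < e -> exists N0 : nat, forall N, (N0 <= N)%nat -> Rpower (INR N) (- a) < e.
Proof.
  intros Ha He.
  set (X := exp (- ln e / a)).
  destruct (nfloor_ex X (Rlt_le _ _ (exp_pos _))) as [n Hn].
  exists (S n). intros N HN.
  assert (HX : X < INR N) by (apply Rlt_le_trans with (INR (S n)); [rewrite S_INR; lra | apply le_INR; auto]).
  assert (HX0 : 0 < X) by apply exp_pos.
  unfold Rpower. rewrite <- (exp_ln e) by auto.
  apply exp_increasing.
  assert (ln X < ln (INR N)) by (apply ln_increasing; lra).
  unfold X in H. rewrite ln_exp in H.
  assert (- ln e < a * ln (INR N)).
  { replace (- ln e) with (a * (- ln e / a)) by (field; lra). apply Rmult_lt_compat_l; auto. }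
  lra.
Qed.

Lemma abs3 x y : Rabs x <= Rabs y + Rabs (y - x).
Proof. unfold Rabs; repeat destruct Rcase_abs; lra. Qed.

Lemma abs3' x y : Rabs (x - y) <= Rabs x + Rabs y.
Proof. unfold Rabs; repeat destruct Rcase_abs; lra. Qed.

Theorem lemmaD6 (lam : nat -> nat -> R)
  (Hpos : forall N i : nat, (i < N)%nat -> 0 < lam N i)
  (mu nu a1 : R) (HC1 : cond_C1 lam mu nu a1)
  (f g : nat -> R) (a2 : R) (HC2 : cond_C2 lam f g a2)
  (HC3 : cond_C3 lam) :
  exists alpha : R, 0 < alpha /\
    exists C : R, exists N0 : nat, forall N : nat, (N0 <= N)%nat ->
      ex_series (fun n => INR n * Rabs (gN lam N n - g n)) /\
      Series (fun n => INR n * Rabs (gN lam N n - g n)) <= C * Rpower (INR N) (- alpha).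
Proof.
  destruct HC1 as [Hmu [Hnu [Ha1 [[C1 [N1 H1]] [C1' [N1' H1']]]]]].
  destruct HC2 as [Ha2 [_ [C2 [N2 H2]]]].
  destruct HC3 as [tau [Htau H3]].
  assert (Hti : / (tau - 1) < / 2) by (apply Rinv_lt_contravar; lra).
  set (eps := Rmin ((tau - 3) / 2) ((/ 2 - / (tau - 1)) / 2)).
  assert (Heps : 0 < eps) by (unfold eps; apply Rmin_pos; lra).
  assert (Heps1 : eps <= (tau - 3) / 2) by apply Rmin_l.
  assert (Heps2 : eps <= (/ 2 - / (tau - 1)) / 2) by apply Rmin_r.
  destruct (H3 eps Heps ltac:(lra)) as [Hls _].
  set (q := tau - 1 - eps).
  assert (Hq : 2 < q) by (unfold q; lra).
  set (u := fun N => sumN N (fun i => Rpower (lam N i) (tau - 1 - eps)) / INR N).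
  assert (HB0 : exists B0, exists Nb, forall N, (Nb <= N)%nat -> u N <= B0).
  { fold u in Hls. unfold LimSup_seq in Hls. destruct (ex_LimSup_seq u) as [l Hl]. simpl in Hls.
    destruct l as [l| |].
    - destruct (Hl (mkposreal 1 Rlt_0_1)) as [_ [Nb HNb]]. exists (l + 1), Nb. intros N HN.
      apply Rlt_le, HNb; auto.
    - simpl in Hls. contradiction.
    - destruct (Hl 0) as [Nb HNb]. exists 0, Nb. intros; apply Rlt_le, HNb; auto. }
  destruct HB0 as [B0 [Nb HB0]].
  set (B := Rabs B0).
  assert (HB : 0 <= B) by apply Rabs_pos.
  assert (HBu : forall N, (Nb <= N)%nat -> u N <= B) by (intros N HN; apply Rle_trans with B0; [auto| apply Rle_abs]).
  destruct (rpow_small a1 (mu / 2 / (Rabs C1 + 1)) Ha1) as [Nm HNm].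
  { apply Rdiv_lt_0_compat. lra. pose proof (Rabs_pos C1); lra. }
  destruct (rpow_small a1 (1 / (Rabs C1' + 1)) Ha1) as [Nn HNn].
  { apply Rdiv_lt_0_compat. lra. pose proof (Rabs_pos C1'); lra. }
  set (N0 := (1 + N1 + N1' + N2 + Nb + Nm + Nn)%nat).
  assert (Hmu2 : forall N, (N0 <= N)%nat -> mu / 2 <= muN lam N).
  { intros N HN. assert (A := H1 N ltac:(unfold N0 in HN; lia)).
    assert (A2 := HNm N ltac:(unfold N0 in HN; lia)).
    assert (Hr : 0 < Rpower (INR N) (- a1)) by (unfold Rpower; apply exp_pos).
    assert (C1 * Rpower (INR N) (- a1) <= mu / 2).
    { apply Rle_trans with ((Rabs C1 + 1) * Rpower (INR N) (- a1)).
      apply Rmult_le_compat_r. lra. pose proof (Rle_abs C1); lra.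
      pose proof (Rabs_pos C1).
      apply Rlt_le. replace (mu / 2) with ((Rabs C1 + 1) * (mu / 2 / (Rabs C1 + 1))) by (field; lra).
      apply Rmult_lt_compat_l; lra. }
    revert A; unfold Rabs; destruct Rcase_abs; lra. }
  assert (Hnu2 : forall N, (N0 <= N)%nat -> nuN lam N <= nu + 1).
  { intros N HN. assert (A := H1' N ltac:(unfold N0 in HN; lia)).
    assert (A2 := HNn N ltac:(unfold N0 in HN; lia)).
    assert (Hr : 0 < Rpower (INR N) (- a1)) by (unfold Rpower; apply exp_pos).
    assert (C1' * Rpower (INR N) (- a1) <= 1).
    { apply Rle_trans with ((Rabs C1' + 1) * Rpower (INR N) (- a1)).
      apply Rmult_le_compat_r. lra. pose proof (Rle_abs C1'); lra.
      pose proof (Rabs_pos C1').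
      apply Rlt_le. replace 1 with ((Rabs C1' + 1) * (1 / (Rabs C1' + 1))) at 2 by (field; lra).
      apply Rmult_lt_compat_l; lra. }
    revert A; unfold Rabs; destruct Rcase_abs; lra. }
  set (Tb := fun K L => Rpower L (2 - q) * (B * (2 / mu)) + (L + 1) / K * (nu + 1)).
  assert (tailM : forall M K L P, (N0 <= M)%nat -> 0 < K -> 0 < L ->
     sum_n (fun n => ind K n * (INR n * Rabs (gN lam M n))) P <= Tb K L).
  { intros M K L P HM HK HL. unfold Tb. apply tail_N; auto;
    first [unfold N0 in HM; lia | apply (HBu M); unfold N0 in HM; lia | apply Hmu2; auto | apply Hnu2; auto]. }
  assert (tailg : forall K L P, 0 < K -> 0 < L ->
     sum_n (fun n => ind K n * (INR n * Rabs (g n))) P <= Tb K L).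
  { intros K L P HK HL. apply le_epsilon. intros e He.
    destruct (rpow_small a2 (e / ((INR P + 1) * (2 * Rabs C2 + 1))) Ha2) as [Ne HNe].
    { apply Rdiv_lt_0_compat; auto. pose proof (pos_INR P); pose proof (Rabs_pos C2).
      apply Rmult_lt_0_compat; lra. }
    set (M := (N0 + Ne + N2)%nat).
    destruct (H2 M ltac:(unfold M; lia)) as [Hex Hser].
    assert (HMr := HNe M ltac:(unfold M; lia)).
    apply Rle_trans with (sum_n (fun n => ind K n * (INR n * Rabs (gN lam M n)) + INR P * Rabs (gN lam M n - g n)) P).
    { apply sum_n_le. intros n Hn. pose proof (ind_01 K n).
      pose proof (abs3 (g n) (gN lam M n)). pose proof (le_INR _ _ Hn). pose proof (pos_INR n).
      pose proof (Rabs_pos (gN lam M n - g n)).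
      assert (INR n * Rabs (g n) <= INR n * Rabs (gN lam M n) + INR P * Rabs (gN lam M n - g n)) by nra.
      assert (0 <= INR n * Rabs (g n)) by (apply Rmult_le_pos; auto; apply Rabs_pos).
      assert (0 <= INR n * Rabs (gN lam M n)) by (apply Rmult_le_pos; auto; apply Rabs_pos).
      assert (0 <= INR P * Rabs (gN lam M n - g n)) by (apply Rmult_le_pos; auto; apply pos_INR).
      nra. }
    rewrite sum_n_plusR, sum_n_scal_r.
    apply Rplus_le_compat. apply tailM; auto. unfold M; lia.
    assert (Hps := partial_le_series (fun n => Rabs (gN lam M n - g n)) P (fun n => Rabs_pos _) Hex).
    pose proof (pos_INR P). pose proof (Rabs_pos C2). pose proof (Rle_abs C2).
    assert (Hr : 0 < Rpower (INR M) (- a2)) by (unfold Rpower; apply exp_pos).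
    assert (Hser' : Series (fun n => Rabs (gN lam M n - g n)) <= 2 * Rabs C2 * Rpower (INR M) (- a2)) by nra.
    assert (Hlt : (INR P + 1) * (2 * Rabs C2 + 1) * Rpower (INR M) (- a2) < e).
    { assert (0 < (INR P + 1) * (2 * Rabs C2 + 1)) by (apply Rmult_lt_0_compat; lra).
      replace e with ((INR P + 1) * (2 * Rabs C2 + 1) * (e / ((INR P + 1) * (2 * Rabs C2 + 1)))) by (field; lra).
      apply Rmult_lt_compat_l; auto. }
    assert (INR P * sum_n (fun n => Rabs (gN lam M n - g n)) P <= INR P * (2 * Rabs C2 * Rpower (INR M) (- a2))).
    { apply Rmult_le_compat_l; auto. lra. }
    nra. }
  set (alpha := Rmin (a2 / 4) ((q - 2) * a2 / 4)).
  assert (Hal : 0 < alpha) by (unfold alpha; apply Rmin_pos; [lra| apply Rmult_lt_0_compat; [apply Rmult_lt_0_compat; lra| lra]]).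
  assert (Hal1 : alpha <= a2 / 4) by apply Rmin_l.
  assert (Hal2 : alpha <= (q - 2) * a2 / 4) by apply Rmin_r.
  exists alpha. split; auto.
  set (B2 := B * (2 / mu)).
  assert (HB2 : 0 <= B2) by (unfold B2; apply Rmult_le_pos; auto; apply Rlt_le, Rdiv_lt_0_compat; lra).
  exists (2 * Rabs C2 + 2 * (B2 + 2 * (nu + 1))), N0.
  intros N HN.
  assert (HNr : 1 <= INR N) by (replace 1 with (INR 1) by reflexivity; apply le_INR; unfold N0 in HN; lia).
  set (K := Rpower (INR N) (a2 / 2)).
  set (L := Rpower (INR N) (a2 / 4)).
  assert (HK : 0 < K) by (unfold K, Rpower; apply exp_pos).
  assert (HL : 0 < L) by (unfold L, Rpower; apply exp_pos).
  destruct (H2 N ltac:(unfold N0 in HN; lia)) as [Hex Hser].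
  set (Bnd := K * (2 * C2 * Rpower (INR N) (- a2)) + 2 * Tb K L).
  assert (Hpart : forall P, sum_n (fun n => INR n * Rabs (gN lam N n - g n)) P <= Bnd).
  { intros P.
    apply Rle_trans with (sum_n (fun n => K * Rabs (gN lam N n - g n) + (ind K n * (INR n * Rabs (gN lam N n)) + ind K n * (INR n * Rabs (g n)))) P).
    { apply sum_n_le. intros n _. pose proof (Rabs_pos (gN lam N n - g n)). pose proof (pos_INR n).
      pose proof (abs3' (gN lam N n) (g n)).
      unfold ind. destruct Rlt_dec as [Hn|Hn].
      - assert (INR n * Rabs (gN lam N n - g n) <= INR n * (Rabs (gN lam N n) + Rabs (g n))) by (apply Rmult_le_compat_l; auto).
        assert (0 <= K * Rabs (gN lam N n - g n)) by (apply Rmult_le_pos; lra). nra.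
      - apply Rnot_lt_le in Hn. assert (INR n * Rabs (gN lam N n - g n) <= K * Rabs (gN lam N n - g n)) by (apply Rmult_le_compat_r; auto). lra. }
    rewrite sum_n_plusR, sum_n_plusR, sum_n_scal_r.
    unfold Bnd. 
    assert (Hps := partial_le_series (fun n => Rabs (gN lam N n - g n)) P (fun n => Rabs_pos _) Hex).
    assert (K * sum_n (fun n => Rabs (gN lam N n - g n)) P <= K * (2 * C2 * Rpower (INR N) (- a2))).
    { apply Rmult_le_compat_l. lra. lra. }
    pose proof (tailM N K L P HN HK HL). pose proof (tailg K L P HK HL). lra. }
  destruct (series_of_bounded _ Bnd (fun n => Rmult_le_pos _ _ (pos_INR n) (Rabs_pos _)) Hpart) as [Hex' Hs'].
  split; auto.
  apply Rle_trans with Bnd; auto.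
  set (R0 := Rpower (INR N) (- alpha)).
  assert (HR0 : 0 < R0) by (unfold R0, Rpower; apply exp_pos).
  assert (HRle : forall e, e <= - alpha -> Rpower (INR N) e <= R0) by (intros e He; apply Rle_Rpower; auto).
  assert (E1 : K * Rpower (INR N) (- a2) = Rpower (INR N) (a2 / 2 + - a2)) by (unfold K; rewrite Rpower_plus; auto).
  assert (E2 : Rpower L (2 - q) = Rpower (INR N) (a2 / 4 * (2 - q))) by (unfold L; apply Rpower_mult).
  assert (E3 : (L + 1) / K = Rpower (INR N) (a2 / 4 + - (a2 / 2)) + Rpower (INR N) (- (a2 / 2))).
  { rewrite Rpower_plus, !Rpower_Ropp. fold K L. field. lra. }
  assert (I1 : Rpower (INR N) (a2 / 2 + - a2) <= R0) by (apply HRle; lra).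
  assert (I2 : Rpower (INR N) (a2 / 4 * (2 - q)) <= R0) by (apply HRle; nra).
  assert (I3 : Rpower (INR N) (a2 / 4 + - (a2 / 2)) <= R0) by (apply HRle; lra).
  assert (I4 : Rpower (INR N) (- (a2 / 2)) <= R0) by (apply HRle; lra).
  unfold Bnd, Tb. fold B2.
  replace (K * (2 * C2 * Rpower (INR N) (- a2))) with (2 * C2 * (K * Rpower (INR N) (- a2))) by ring.
  rewrite E1, E2, E3.
  pose proof (Rle_abs C2). pose proof (Rabs_pos C2).
  assert (P1 : 2 * C2 * Rpower (INR N) (a2 / 2 + - a2) <= 2 * Rabs C2 * R0).
  { assert (0 < Rpower (INR N) (a2 / 2 + - a2)) by (unfold Rpower; apply exp_pos). nra. }
  assert (P2 : Rpower (INR N) (a2 / 4 * (2 - q)) * B2 <= R0 * B2) by (apply Rmult_le_compat_r; auto).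
  assert (P3 : (Rpower (INR N) (a2 / 4 + - (a2 / 2)) + Rpower (INR N) (- (a2 / 2))) * (nu + 1) <= (R0 + R0) * (nu + 1)).
  { apply Rmult_le_compat_r; lra. }
  nra.
Qed.
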